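(* In the curved-exam game described in the context, let $BR_i(x_{-i}):=\arg\max_{x_i\in[0,1]}U_i(x_i,x_{-i})$ and $$C(x_{-i}):=\Big\{0,\ \alpha_i-(1-\alpha_i)\Big(\tfrac{nm}{n-1}-\bar x_{-i}\Big),\ \alpha_i\Big\}\cap[0,1].$$ Then $$BR_i(x_{-i})=\begin{cases}\{\alpha_i\} & \text{if } \frac{nm}{n-1}<\bar x_{-i}\le 1,\\[2pt] \arg\max_{x_i\in C(x_{-i})}U_i(x_i,x_{-i}) & \text{if } \frac{nm-1}{n-1}\le \bar x_{-i}\le\frac{nm}{n-1},\\[2pt] \{\alpha_i-(1-\alpha_i)(\frac{nm}{n-1}-\bar x_{-i})\} & \text{if } \frac{nm}{n-1}-\frac{\alpha_i}{1-\alpha_i}\le\bar x_{-i}<\frac{nm-1}{n-1},\\[2pt] \{0\} & \text{if } 0\le \bar x_{-i}\le \frac{nm}{n-1}-\frac{\alpha_i}{1-\alpha_i}.\end{cases}$$ (Whenever $\bar x_{-i}$ lies in one of the stated sets, $BR_i(x_{-i})$ is as given; some of these sets may be empty.)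
   Context: The curved-exam game: fix $n\ge2$, abilities $\alpha_1,\dots,\alpha_n\in(0,1)$, target mean $m\in(0,1)$. Student $i$ chooses $x_i\in[0,1]$; $x_{-i}=(x_j)_{j\ne i}$; $\bar x=\frac1n\sum_j x_j$, $\bar x_{-i}=\frac1{n-1}\sum_{j\ne i}x_j$. Grade $G_i(x)=x_i+\max(m-\bar x,0)=\max\big(m+\frac{n-1}{n}(x_i-\bar x_{-i}),x_i\big)$ (not truncated at 1); payoff $U_i(x)=G_i(x)^{\alpha_i}(1-x_i)^{1-\alpha_i}$. *)

(* Defs.v *)
(* R : realType, real powers via powR (a `^ x),
   which satisfies 0 `^ x = 0 for x <> 0, as needed for G^alpha at G = 0. *)
From HB Require Import structures.
From mathcomp Require Import all_boot all_order all_algebra.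
From mathcomp Require Import all_classical all_reals all_analysis.
Set Implicit Arguments. Unset Strict Implicit. Unset Printing Implicit Defensive.
Import Order.TTheory GRing.Theory Num.Theory.
Local Open Scope classical_set_scope.
Local Open Scope ring_scope.

Section Game.
Variables (R : realType) (n : nat).

Definition avg (x : 'I_n -> R) : R := (\sum_(j < n) x j) / n%:R.

Definition avg_others (x : 'I_n -> R) (i : 'I_n) : R :=
  (\sum_(j < n | j != i) x j) / (n.-1)%:R.

Definition grade (m : R) (x : 'I_n -> R) (i : 'I_n) : R :=
  x i + Num.max (m - avg x) 0.

Definition payoff (alpha : 'I_n -> R) (m : R) (x : 'I_n -> R) (i : 'I_n) : R :=
  powR (grade m x i) (alpha i) * powR (1 - x i) (1 - alpha i).

Definition upd (x : 'I_n -> R) (i : 'I_n) (y : R) : 'I_n -> R :=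
  fun j => if j == i then y else x j.

Definition argmax (S : set R) (f : R -> R) : set R :=
  [set y | S y /\ forall z, S z -> f z <= f y].

Definition best_response (alpha : 'I_n -> R) (m : R) (x : 'I_n -> R) (i : 'I_n)
  : set R :=
  argmax [set y | 0 <= y <= 1] (fun y => payoff alpha m (upd x i y) i).

Definition candidates (alpha : 'I_n -> R) (m : R) (x : 'I_n -> R) (i : 'I_n)
  : set R :=
  [set y | (y = 0 \/
            y = alpha i - (1 - alpha i) * (n%:R * m / (n.-1)%:R - avg_others x i) \/
            y = alpha i) /\ 0 <= y <= 1].

End Game.

(* Main.v *)
Require Import Defs.
From HB Require Import structures.
From mathcomp Require Import all_boot all_order all_algebra.
From mathcomp Require Import all_classical all_reals all_analysis.
From mathcomp Require Import ring lra.
Import Order.TTheory GRing.Theory Num.Theory.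
Local Open Scope classical_set_scope.
Local Open Scope ring_scope.

Section A.
Variable R : realType.

Lemma ln_lt_sub1 (w : R) : 0 < w -> w != 1 -> ln w < w - 1.
Proof.
move=> w0 w1.
have h : ln w != 0 by rewrite ln_eq0.
have := expR_gt1Dx h; rewrite lnK ?posrE //; lra.
Qed.

Lemma amgm (a u v : R) : 0 < a < 1 -> 0 <= u -> 0 <= v -> u != v ->
  powR u a * powR v (1 - a) < a * u + (1 - a) * v.
Proof.
move=> /andP[a0 a1] u0 v0 uv.
have [ue|u0'] := eqVneq u 0.
  rewrite ue in uv *; rewrite powR0 ?gt_eqF // mul0r mulr0 add0r.
  have vp : 0 < v by rewrite lt_neqAle uv v0.
  by apply: mulr_gt0 => //; lra.
have [ve|v0'] := eqVneq v 0.
  rewrite ve in uv *; rewrite (powR0 (x := 1 - a)); last by apply/eqP; lra.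
  rewrite mulr0 mulr0 addr0.
  have up : 0 < u by rewrite lt_neqAle eq_sym u0' u0.
  by apply: mulr_gt0.
have up : 0 < u by rewrite lt_neqAle eq_sym u0' u0.
have vp : 0 < v by rewrite lt_neqAle eq_sym v0' v0.
set M := a * u + (1 - a) * v.
have Mp : 0 < M by rewrite /M; apply: addr_gt0; apply: mulr_gt0 => //; lra.
rewrite /powR (gt_eqF up) (gt_eqF vp) -expRD.
rewrite -[M in _ < M](lnK (Mp : M \in Num.pos)) ltr_expR.
have uM : u / M != 1.
  apply/eqP => h; have : u = M by rewrite -(divfK (lt0r_neq0 Mp) u) h mul1r.
  rewrite /M => h2; move/eqP: uv; apply; apply: (mulfI (x := 1 - a)).
    by apply/eqP; lra.
  lra.
have vM : v / M != 1.
  apply/eqP => h; have : v = M by rewrite -(divfK (lt0r_neq0 Mp) v) h mul1r.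
  rewrite /M => h2; move/eqP: uv; apply; apply: (mulfI (x := a)).
    by apply/eqP; lra.
  lra.
have h1 := @ln_lt_sub1 _ (divr_gt0 up Mp) uM.
have h2 := @ln_lt_sub1 _ (divr_gt0 vp Mp) vM.
rewrite ln_div ?posrE // in h1; rewrite ln_div ?posrE // in h2.
have e : a * (u / M) + (1 - a) * (v / M) = 1.
  by rewrite !mulrA -mulrDl divff ?gt_eqF.
have h1' : a * (ln u - ln M) < a * (u / M - 1) by rewrite ltr_pM2l.
have h2' : (1 - a) * (ln v - ln M) < (1 - a) * (v / M - 1) by rewrite ltr_pM2l //; lra.
lra.
Qed.

Lemma key (a p1 q1 p2 q2 : R) : 0 < a < 1 -> 0 < p1 -> 0 < q1 -> 0 <= p2 -> 0 <= q2 ->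
  p2 * q1 != q2 * p1 -> a * p2 * q1 + (1 - a) * q2 * p1 <= p1 * q1 ->
  powR p2 a * powR q2 (1 - a) < powR p1 a * powR q1 (1 - a).
Proof.
move=> ha p1p q1p p2p q2p ne le.
have -> : p2 = p1 * (p2 / p1) by rewrite mulrC divfK ?gt_eqF.
have -> : q2 = q1 * (q2 / q1) by rewrite mulrC divfK ?gt_eqF.
rewrite (powRM _ (ltW p1p) (divr_ge0 p2p (ltW p1p))) (powRM _ (ltW q1p) (divr_ge0 q2p (ltW q1p))).
rewrite mulrACA -[X in _ < X]mulr1 ltr_pM2l; last by apply: mulr_gt0; apply: powR_gt0.
apply: (lt_le_trans (@amgm a (p2/p1) (q2/q1) ha (divr_ge0 p2p (ltW p1p)) (divr_ge0 q2p (ltW q1p)) _)).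
  apply/eqP => h; move/eqP: ne; apply.
  by apply/eqP; rewrite -eqr_div ?lt0r_neq0 // h.
rewrite -(ler_pM2r (mulr_gt0 p1p q1p)) mul1r mulrDl.
have -> : a * (p2 / p1) * (p1 * q1) = a * p2 * q1.
  by rewrite mulrA -(mulrA a) divfK ?gt_eqF // mulrA.
have -> : (1 - a) * (q2 / q1) * (p1 * q1) = (1 - a) * q2 * p1.
  by rewrite (mulrC p1) mulrA -(mulrA (1-a)) divfK ?gt_eqF // mulrA.
done.
Qed.


Section B.
Variables (a b c : R).
Hypothesis a01 : 0 < a < 1.
Hypothesis b01 : 0 < b < 1.

Definition F y := powR (Num.max y (b * (c + y))) a * powR (1 - y) (1 - a).
Definition H y := powR y a * powR (1 - y) (1 - a).
Definition L y := powR (b * (c + y)) a * powR (1 - y) (1 - a).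

Lemma F_geH y : 0 <= y -> H y <= F y.
Proof.
move=> y0; rewrite /H /F ler_wpM2r ?powR_ge0 //.
case/andP: a01 => a0 _.
apply: ge0_ler_powR; rewrite ?nnegrE //; first exact: ltW.
  by rewrite le_max y0.
by rewrite le_max lexx.
Qed.

Lemma F_geL y : 0 <= b * (c + y) -> L y <= F y.
Proof.
move=> y0; rewrite /L /F ler_wpM2r ?powR_ge0 //.
case/andP: a01 => a0 _.
apply: ge0_ler_powR; rewrite ?nnegrE //; first exact: ltW.
  by rewrite le_max y0 orbT.
by rewrite le_max lexx orbT.
Qed.

Lemma F_H y : b * (c + y) <= y -> F y = H y.
Proof. by move=> h; rewrite /F /H max_l. Qed.

Lemma F_L y : y <= b * (c + y) -> F y = L y.
Proof. by move=> h; rewrite /F /L max_r. Qed.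

Lemma LH z : 0 <= z <= 1 -> z != a -> H z < H a.
Proof.
case/andP: a01 => a0 a1 /andP[z0 z1] za.
apply: key => //; try lra.
Qed.

Lemma LL z : -1 < c -> 0 <= z <= 1 -> z != a - (1 - a) * c -> 0 <= b * (c + z) ->
  L z < L (a - (1 - a) * c).
Proof.
case/andP: a01 => a0 a1; case/andP: b01 => b0 b1 c1 /andP[z0 z1] zne bz.
set y0 := a - (1 - a) * c.
have e1 : c + y0 = a * (1 + c) by rewrite /y0; ring.
have e2 : 1 - y0 = (1 - a) * (1 + c) by rewrite /y0; ring.
apply: key => //; try lra.
- by rewrite e1; apply: mulr_gt0 => //; apply: mulr_gt0 => //; lra.
- by rewrite e2; apply: mulr_gt0 => //; lra.
- apply/eqP => h.
  have : b * (1 + c) * (z - y0) = 0.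
    rewrite -[RHS](subrr (b * (c + z) * (1 - y0))) {2}h /y0; ring.
  move/eqP; rewrite !mulf_eq0 => /orP[/orP[|]|] /eqP; try lra.
- rewrite le_eqVlt; apply/orP; left; apply/eqP; rewrite /y0; ring.
Qed.

Lemma L0 z : 0 < c -> a <= (1 - a) * c -> 0 < z <= 1 -> L z < L 0.
Proof.
case/andP: a01 => a0 a1; case/andP: b01 => b0 b1 c0 hc /andP[z0 z1].
apply: key => //; try lra.
- by rewrite addr0; apply: mulr_gt0.
- by apply: mulr_ge0; lra.
- apply/eqP => h.
  have : b * z * (1 + c) = 0.
    rewrite -[RHS](subrr (b * (c + z) * (1 - 0))) {2}h; ring.
  move/eqP; rewrite !mulf_eq0 => /orP[/orP[|]|] /eqP; lra.
- rewrite -subr_ge0.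
  have -> : b * (c + 0) * (1 - 0) - (a * (b * (c + z)) * (1 - 0) + (1 - a) * (1 - z) * (b * (c + 0)))
     = b * z * ((1 - a) * c - a) by ring.
  by apply: mulr_ge0; [apply: mulr_ge0|]; lra.
Qed.

Lemma Hys z ys : 0 < ys -> ys < z <= 1 -> a <= ys -> H z < H ys.
Proof.
case/andP: a01 => a0 a1 ys0 /andP[yz z1] ays.
apply: key => //; try lra.
rewrite -subr_ge0.
have -> : ys * (1 - ys) - (a * z * (1 - ys) + (1 - a) * (1 - z) * ys) = (z - ys) * (ys - a) by ring.
by apply: mulr_ge0; lra.
Qed.


Lemma case1 : c < 0 -> forall z, 0 <= z <= 1 -> z != a -> F z < F a.
Proof.
move=> c0 z /andP[z0 z1] za.
case/andP: a01 => a0 a1; case/andP: b01 => b0 b1.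
rewrite F_H; last by nra.
have hz : 0 <= z <= 1 by rewrite z0 z1.
apply: (lt_le_trans (@LH z hz za)).
by apply: F_geH; lra.
Qed.

Lemma case3 : 1 < b * (c + 1) -> (1 - a) * c <= a ->
  forall z, 0 <= z <= 1 -> z != a - (1 - a) * c -> F z < F (a - (1 - a) * c).
Proof.
move=> hc ha z /andP[z0 z1] zne.
case/andP: a01 => a0 a1; case/andP: b01 => b0 b1.
have c1 : -1 < c by nra.
have zL : z <= b * (c + z) by nra.
rewrite F_L //.
have bz : 0 <= b * (c + z) by lra.
have hz : 0 <= z <= 1 by rewrite z0 z1.
apply: (lt_le_trans (@LL z c1 hz zne bz)).
apply: F_geL.
have -> : c + (a - (1 - a) * c) = a * (1 + c) by ring.
by apply: mulr_ge0; [lra|]; apply: mulr_ge0; lra.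
Qed.

Lemma case4 : 1 - b <= b -> a <= (1 - a) * c ->
  forall z, 0 <= z <= 1 -> z != 0 -> F z < F 0.
Proof.
move=> hb ha z /andP[z0 z1] zne.
case/andP: a01 => a0 a1; case/andP: b01 => b0 b1.
have c0 : 0 < c by nra.
have zp : 0 < z by rewrite lt_neqAle eq_sym zne z0.
have F0 : L 0 <= F 0 by apply: F_geL; rewrite addr0; apply: mulr_ge0; lra.
have [zL|zH] := leP z (b * (c + z)).
  rewrite F_L //; apply: (lt_le_trans _ F0); apply: L0 => //; by rewrite zp z1.
rewrite F_H; last exact: ltW.
set ys := b * c / (1 - b).
have hys : ys * (1 - b) = b * c by rewrite /ys divfK //; apply/eqP; lra.
have e : b * (c + ys) = ys.
  have : ys * (1 - b) = b * c := hys. move=> h; lra.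
have ys0 : 0 < ys by nra.
have ysz : ys < z by nra.
have ays : a <= ys by nra.
have hz : ys < z <= 1 by rewrite ysz z1.
apply: (lt_trans (@Hys z ys ys0 hz ays)).
have -> : H ys = L ys by rewrite /H /L e.
apply: (lt_le_trans _ F0); apply: L0 => //.
rewrite ys0 /=; lra.
Qed.

Lemma case2 : 0 <= c -> forall z, 0 <= z <= 1 ->
  (z = 0 \/ z = a - (1 - a) * c \/ z = a) \/
  exists w, ((w = 0 \/ w = a - (1 - a) * c \/ w = a) /\ 0 <= w <= 1) /\ F z < F w.
Proof.
move=> c0 z /andP[z0 z1].
case/andP: a01 => a0 a1; case/andP: b01 => b0 b1.
have [->|z0'] := eqVneq z 0; first by left; left.
have [->|zy] := eqVneq z (a - (1 - a) * c); first by left; right; left.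
have [->|za] := eqVneq z a; first by left; right; right.
right.
have zp : 0 < z by rewrite lt_neqAle eq_sym z0' z0.
have [zL|zH] := leP z (b * (c + z)).
  rewrite F_L //.
  have [y0p|y0n] := leP 0 (a - (1 - a) * c).
    exists (a - (1 - a) * c); split.
      split; first by right; left.
      by rewrite y0p /=; nra.
    have bz : 0 <= b * (c + z) by lra.
    have hz : 0 <= z <= 1 by rewrite z0 z1.
    have c1 : -1 < c by lra.
    apply: (lt_le_trans (@LL z c1 hz zy bz)).
    apply: F_geL.
    have -> : c + (a - (1 - a) * c) = a * (1 + c) by ring.
    by apply: mulr_ge0; [lra|]; apply: mulr_ge0; lra.
  exists 0; split.
    by split; [left | rewrite lexx ler01].
  have cp : 0 < c by nra.
  have F0 : L 0 <= F 0 by apply: F_geL; rewrite addr0; apply: mulr_ge0; lra.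
  apply: (lt_le_trans _ F0); apply: L0 => //; [lra | by rewrite zp z1].
rewrite F_H; last exact: ltW.
exists a; split.
  by split; [right; right | apply/andP; split; lra].
have hz : 0 <= z <= 1 by rewrite z0 z1.
apply: (lt_le_trans (@LH z hz za)).
by apply: F_geH; lra.
Qed.

End B.
End A.

Arguments F {R}.
Arguments case1 {R a b c}.
Arguments case2 {R a b c}.
Arguments case3 {R a b c}.
Arguments case4 {R a b c}.

Lemma argmax_single (R : realType) (S : set R) (f : R -> R) y0 :
  S y0 -> (forall z, S z -> z != y0 -> f z < f y0) -> argmax S f = [set y0].
Proof.
move=> Sy H; apply/seteqP; split => z /=.
  case=> Sz Hz; apply/eqP; apply/negP => /negP zne.
  by have := H z Sz zne; rewrite ltNge Hz.
move=> ->; split => // w Sw.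
have [->|wne] := eqVneq w y0; first exact: lexx.
exact: ltW (H w Sw wne).
Qed.

Lemma argmax_cand (R : realType) (S C : set R) (f : R -> R) :
  C `<=` S -> (forall z, S z -> C z \/ exists w, C w /\ f z < f w) ->
  argmax S f = argmax C f.
Proof.
move=> CS H; apply/seteqP; split => z /=.
  case=> Sz Hz; case: (H z Sz) => [Cz|[w [Cw lt]]].
    by split => // w Cw; apply: Hz; apply: CS.
  by have := Hz w (CS _ Cw); rewrite leNgt lt.
case=> Cz Hz; split; first exact: CS.
move=> w Sw; case: (H w Sw) => [Cw|[v [Cv lt]]]; first exact: Hz.
exact: ltW (lt_le_trans lt (Hz v Cv)).
Qed.

Theorem mainTheorem6 (R : realType) (n : nat) (alpha : 'I_n -> R) (m : R)
  (x : 'I_n -> R) (i : 'I_n) :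
  (2 <= n)%N ->
  (forall j, 0 < alpha j < 1) ->
  0 < m < 1 ->
  (forall j, j != i -> 0 <= x j <= 1) ->
  let xb := avg_others x i in
  let a := alpha i in
  let t := n%:R * m / (n.-1)%:R in
  let s := (n%:R * m - 1) / (n.-1)%:R in
  let BR := best_response alpha m x i in
  [/\ (t < xb <= 1 -> BR = [set a]),
      (s <= xb <= t ->
         BR = argmax (candidates alpha m x i)
                     (fun y => payoff alpha m (upd x i y) i)),
      (t - a / (1 - a) <= xb < s -> BR = [set a - (1 - a) * (t - xb)]) &
      (0 <= xb <= t - a / (1 - a) -> BR = [set 0])].
Proof.
move=> n2 halpha hm hx xb a t s BR.
have ha : 0 < a < 1 := halpha i.
have [a0 a1] : 0 < a /\ a < 1 by case/andP: ha.
set N1 : R := (n.-1)%:R.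
have N1ge1 : 1 <= N1 by rewrite /N1 ler1n; case: n n2 {x alpha i hx halpha BR xb a t s N1 ha a0 a1} => [|[|k]].
have N1p : 0 < N1 by lra.
have nN : n%:R = N1 + 1 by rewrite /N1 natr1 prednK //; case: n n2 {x alpha i hx halpha BR xb a t s N1 ha a0 a1 N1ge1 N1p}.
set S := \sum_(j < n | j != i) x j.
have xbE : xb = S / N1 by [].
set b := N1 / (N1 + 1).
set c := t - xb.
have hb01 : 0 < b < 1.
  apply/andP; split; first by apply: divr_gt0; lra.
  by rewrite /b ltr_pdivrMr; lra.
have hb : 1 - b <= b.
  have -> : 1 - b = 1 / (N1 + 1) by rewrite /b; field; lra.
  by rewrite /b; apply: ler_wpM2r; [rewrite invr_ge0; lra | lra].
have avgE : forall y, avg (upd x i y) = (y + S) / (N1 + 1).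
  move=> y; rewrite /avg -nN (bigD1 i) //= /upd eqxx; congr ((_ + _) / _).
  by apply: eq_bigr => j /negbTE ->.
have payE : (fun y => payoff alpha m (upd x i y) i) = F a b c.
  apply: funext => y; rewrite /payoff /grade /F avgE {1 2}/upd eqxx.
  have E : y + (m - (y + S) / (N1 + 1)) = b * (c + y).
    by rewrite /b /c /t xbE nN; field; apply/andP; split; lra.
  congr (powR _ _ * _).
  have [h|h] := leP 0 (m - (y + S) / (N1 + 1)).
    by rewrite E max_r //; lra.
  by rewrite addr0 max_l //; lra.
have BRE : BR = argmax [set y | 0 <= y <= 1] (F a b c) by rewrite /BR /best_response payE.
have sE : s = t - N1^-1 by rewrite /s /t mulrBl mul1r.
split.
- move=> /andP[h1 h2].
  have c0 : c < 0 by rewrite /c; lra.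
  rewrite BRE; apply: argmax_single; first by rewrite /= !ltW.
  by move=> z hz zne; exact: (case1 ha hb01 c0 z hz zne).
- move=> /andP[h1 h2].
  have c0 : 0 <= c by rewrite /c; lra.
  rewrite /BR /best_response payE; apply: argmax_cand.
    by move=> z [_ hz].
  move=> z hz; case: (case2 ha hb01 c0 z hz) => [h|[w [hw lt]]].
    by left; split.
  by right; exists w.
- move=> /andP[h1 h2].
  have hc1 : N1^-1 < c by rewrite /c; lra.
  have hc : 1 < b * (c + 1).
    rewrite /b mulrAC ltr_pdivlMr; last lra.
    have : N1 * N1^-1 < N1 * c by rewrite ltr_pM2l.
    rewrite divff ?gt_eqF //; lra.
  have hca : (1 - a) * c <= a.
    have : c <= a / (1 - a) by rewrite /c; lra.
    by rewrite ler_pdivlMr ?subr_gt0 // mulrC.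
  have cp : 0 < c by apply: lt_trans hc1; rewrite invr_gt0.
  rewrite BRE; apply: argmax_single.
    rewrite /=; apply/andP; split; last by nra.
    lra.
  by move=> z hz zne; exact: (case3 ha hb01 hc hca z hz zne).
- move=> /andP[h1 h2].
  have hca : a <= (1 - a) * c.
    have : a / (1 - a) <= c by rewrite /c; lra.
    by rewrite ler_pdivrMr ?subr_gt0 // mulrC.
  rewrite BRE; apply: argmax_single; first by rewrite /= lexx ler01.
  by move=> z hz zne; exact: (case4 ha hb01 hb hca z hz zne).
Qed.
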